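(* For any two finite structures $\mathcal M$ and $\mathcal N$ over a vocabulary containing the binary relation symbol $E$, and any points $w\in\mathrm{DOM}(\mathcal M)$ and $u\in\mathrm{DOM}(\mathcal N)$, we have $\mathsf{WL}^\infty(\mathcal M,w)=\mathsf{WL}^\infty(\mathcal N,u)$ if and only if $\mathcal M\uplus\mathcal N\models\varphi_{\mathsf{WL}}(w,u)$, where $\varphi_{\mathsf{WL}}(x,y) := \mathrm{GFP}_{W,x,y}\big[Wxy\land\forall z\,\big(Hyx[\,Exy\land Wyz,\ Eyx\land Wxz\,]\big)\big]$.
   Context: $\mathcal M\uplus\mathcal N$ is the disjoint union of $\mathcal M$ and $\mathcal N$ (domains and relations taken as disjoint unions). Weisfeiler–Leman colors with respect to $E$: $c^{\mathcal M}_0(w)=\ast$ (a fixed constant), $c^{\mathcal M}_{t+1}(w)=\big(c^{\mathcal M}_t(w),\{\{c^{\mathcal M}_t(v):(w,v)\in E^{\mathcal M}\}\}\big)$ (multiset); $\mathsf{WL}^\infty(\mathcal M,w)=\mathsf{WL}^\infty(\mathcal N,u)$ means that $w$ and $u$ receive the same stable Weisfeiler–Leman color, i.e. $c^{\mathcal M}_t(w)=c^{\mathcal N}_t(u)$ for all $t\in\mathbb N$. First-order logic is extended as follows. Härtig's quantifier: for formulae $\varphi,\psi$ and variables $x,y$, $Hxy[\varphi,\psi]$ is a formula, true in a structure $\mathcal A$ under an assignment $s$ iff $|\{a\in\mathrm{DOM}(\mathcal A):\mathcal A\models\varphi[s(x\mapsto a)]\}|=|\{b\in\mathrm{DOM}(\mathcal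 A):\mathcal A\models\psi[s(y\mapsto b)]\}|$ (so $x$ is bound in $\varphi$ and $y$ is bound in $\psi$). Greatest fixed points: for a formula $\varphi(x,y)$ (possibly with Härtig quantifiers) containing a binary relation symbol $W$, $\mathrm{GFP}_{W,x,y}[\varphi]$ is a formula with free variables $x,y$; in $\mathcal A$ let $W^0=\mathrm{DOM}(\mathcal A)^2$ and $W^{n+1}=\{(a,b)\in\mathrm{DOM}(\mathcal A)^2:\mathcal A\models\varphi(a,b)\text{ with }W\text{ interpreted as }W^n\}$; then $\mathcal A\models\mathrm{GFP}_{W,x,y}[\varphi](a,b)$ iff $(a,b)\in W^n$ for all $n\in\mathbb N$. *)

(* Defs.v *)
From HB Require Import structures.
From mathcomp Require Import all_boot.
From mathcomp Require Import finmap multiset.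
Set Implicit Arguments. Unset Strict Implicit. Unset Printing Implicit Defensive.

(* ---------- Finite structures (only the symbol E matters) ---------- *)
Record struct := Struct { dom : finType; Erel : rel dom }.

Definition union_E (M N : struct) : rel (dom M + dom N)%type :=
  fun a b => match a, b with
  | inl a', inl b' => @Erel M a' b'
  | inr a', inr b' => @Erel N a' b'
  | _, _ => false
  end.
Definition disj_union (M N : struct) : struct :=
  @Struct (dom M + dom N)%type (@union_E M N).

Fixpoint Col (t : nat) : choiceType :=
  if t is t'.+1 then ((Col t' * multiset (Col t'))%type : choiceType)
  else (unit : choiceType).

Fixpoint wl_col (A : struct) (t : nat) : dom A -> Col t :=
  match t return dom A -> Col t with
  | 0 => fun _ => tt
  | t'.+1 => fun w =>
      (wl_col t' w, seq_mset [seq wl_col t' v | v <- enum [pred v | @Erel A w v]])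
  end.

Definition WL_inf_eq (M N : struct) (w : dom M) (u : dom N) : Prop :=
  forall t : nat, wl_col t w = wl_col t u.

Inductive form :=
  | FE of nat & nat
  | FW of nat & nat
  | FNot of form
  | FAnd of form & form
  | FAll of nat & form
  | FH of nat & nat & form & form.  (* H x y [phi, psi]: x bound in phi, y in psi *)

Definition upd (D : Type) (s : nat -> D) (z : nat) (a : D) : nat -> D :=
  fun n => if n == z then a else s n.

Fixpoint sat (A : struct) (W : rel (dom A)) (s : nat -> dom A) (f : form) : bool :=
  match f with
  | FE x y => @Erel A (s x) (s y)
  | FW x y => W (s x) (s y)
  | FNot g => ~~ sat W s g
  | FAnd g h => sat W s g && sat W s h
  | FAll z g => [forall a : dom A, sat W (upd s z a) g]
  | FH x y g h =>
      #|[pred a : dom A | sat W (upd s x a) g]| ==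
      #|[pred b : dom A | sat W (upd s y b) h]|
  end.

(* Greatest fixed point GFP_{W,x,y}[phi]: W^0 = DOM^2,
   W^{n+1} = {(a,b) | A |= phi(a,b) with W := W^n}. *)
Fixpoint gfp_stage (A : struct) (phi : form) (x y : nat) (s : nat -> dom A)
    (n : nat) : rel (dom A) :=
  match n with
  | 0 => fun _ _ => true
  | n'.+1 => fun a b => sat (gfp_stage phi x y s n') (upd (upd s x a) y b) phi
  end.

Definition sat_gfp (A : struct) (phi : form) (x y : nat) (s : nat -> dom A)
    (a b : dom A) : Prop :=
  forall n : nat, gfp_stage phi x y s n a b.

(* Variables: x = 0, y = 1, z = 2. *)
Definition phiWL_body : form :=
  FAnd (FW 0 1)
       (FAll 2 (FH 1 0 (FAnd (FE 0 1) (FW 1 2)) (FAnd (FE 1 0) (FW 0 2)))).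

(* (M ⊎ N) |= phi_WL(w,u); phi_WL has no free variables besides x,y,
   so the background assignment is irrelevant; we use the constant one. *)
Definition models_phiWL (M N : struct) (w : dom M) (u : dom N) : Prop :=
  @sat_gfp (disj_union M N) phiWL_body 0 1 (fun _ => inl w) (inl w) (inr u).

(* Main.v *)
Require Import Defs.
From mathcomp Require Import all_boot.
From mathcomp Require Import finmap multiset.
Set Implicit Arguments. Unset Strict Implicit.

Lemma count_map_enum (T : finType) (C : eqType) (P : pred T) (g : T -> C) c :
  count_mem c [seq g v | v <- enum P] = #|[pred v | P v && (g v == c)]|.
Proof.
rewrite count_map cardE /enum_mem size_filter /enum_mem count_filter.
by apply: eq_count => x; rewrite /= !inE andbC.
Qed.

Lemma main (A : struct) (s : nat -> dom A) n a b :
  gfp_stage phiWL_body 0 1 s n a b = (wl_col n a == wl_col n b).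
Proof.
elim: n a b => [//|n IH] a b /=.
rewrite /upd /= IH xpair_eqE; congr andb.
have E1 x z : #|[pred a1 | Erel x a1 & gfp_stage phiWL_body 0 1 s n a1 z]| =
  #|[pred a1 | Erel x a1 && (wl_col n a1 == wl_col n z)]|.
  by apply: eq_card => v; rewrite !inE IH.
apply/forallP/eqP => [H|H z].
  apply/msetP => c; rewrite !mset_seqE !count_map_enum.
  case: (pickP (fun v : dom A => wl_col n v == c)) => [z /eqP Hz|none].
    by have := H z; rewrite !E1 Hz => /eqP.
  rewrite !eq_card0 // => v; rewrite !inE;
  by apply/negbTE; apply/negP => /andP[_ Hv]; have := none v; rewrite /= Hv.
rewrite !E1 -!count_map_enum -!mset_seqE; apply/eqP; by rewrite H.
Qed.

Lemma perm_inl (T1 T2 : finType) (Q : pred (T1+T2)%type) (P : pred T1) :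
  (forall x, Q (inl x) = P x) -> (forall y, Q (inr y) = false) ->
  perm_eq (enum Q) (map inl (enum P)).
Proof.
move=> HL HR; apply: uniq_perm; first exact: enum_uniq.
  by rewrite map_inj_uniq ?enum_uniq //; move=> x y [].
have inj : injective (@inl T1 T2) by move=> ? ? [].
case=> [x|y]; rewrite mem_enum.
  by rewrite (mem_map inj) mem_enum; exact: HL.
by rewrite [_ \in Q]HR; symmetry; apply/mapP => -[].
Qed.

Lemma perm_inr (T1 T2 : finType) (Q : pred (T1+T2)%type) (P : pred T2) :
  (forall x, Q (inr x) = P x) -> (forall y, Q (inl y) = false) ->
  perm_eq (enum Q) (map inr (enum P)).
Proof.
move=> HL HR; apply: uniq_perm; first exact: enum_uniq.
  by rewrite map_inj_uniq ?enum_uniq //; move=> x y [].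
have inj : injective (@inr T1 T2) by move=> ? ? [].
case=> [y|x]; rewrite mem_enum.
  by rewrite [_ \in Q]HR; symmetry; apply/mapP => -[].
by rewrite (mem_map inj) mem_enum; exact: HL.
Qed.

Lemma union_col (M N : struct) n :
  (forall w, @wl_col (disj_union M N) n (inl w) = wl_col n w) /\
  (forall u, @wl_col (disj_union M N) n (inr u) = wl_col n u).
Proof.
elim: n => [//|n [IHl IHr]]; split=> w /=; rewrite ?IHl ?IHr; congr pair;
  apply/eq_seq_msetP.
- apply: perm_trans (perm_map _ (@perm_inl _ _ _ [pred v | Erel w v] _ _)) _ => //.
  by rewrite -map_comp (eq_map IHl).
- apply: perm_trans (perm_map _ (@perm_inr _ _ _ [pred v | Erel w v] _ _)) _ => //.
  by rewrite -map_comp (eq_map IHr).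
Qed.

Theorem theorem3 (M N : struct) (w : dom M) (u : dom N) :
  @WL_inf_eq M N w u <-> @models_phiWL M N w u.
Proof.
rewrite /WL_inf_eq /models_phiWL /sat_gfp.
split=> H n.
  by rewrite main (proj1 (union_col M N n)) (proj2 (union_col M N n)) H.
by have := H n; rewrite main (proj1 (union_col M N n)) (proj2 (union_col M N n)) => /eqP.
Qed.
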